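(* Let $X$ be a closed subset of a closed symplectic manifold $(M,\omega)$ and $a$ an idempotent of $QH_\ast(M,\omega)$. If $\bar U$ is $a$-superheavy for every open neighborhood $U$ of $X$, then $X$ is $a$-superheavy.
   Context: $c(a,H)$ is Oh's spectral invariant on $QH_\ast(M,\omega)\times C^\infty(M\times[0,1])$; for an idempotent $a$ and $H\in C^\infty(M)$, $\zeta_a(H)=\lim_{l\to\infty}c(a,lH)/l$. A closed set $Y\subset M$ is $a$-superheavy if $\zeta_a(H)\le\sup_Y H$ for all $H\in C^\infty(M)$. *)

(* Defs.v *)
From HB Require Import structures.
From mathcomp Require Import all_boot all_order all_algebra.
From mathcomp Require Import all_classical all_reals all_analysis.
Set Implicit Arguments. Unset Strict Implicit. Unset Printing Implicit Defensive.
Import Order.TTheory GRing.Theory Num.Theory.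
Import numFieldTopology.Exports numFieldNormedType.Exports.
Local Open Scope classical_set_scope.
Local Open Scope ring_scope.

(* Abstract superheaviness: [Smooth] is the class of admissible
   Hamiltonians (smooth functions M -> R), [zeta] plays the role of the
   asymptotic spectral invariant zeta_a.  A closed set Y is superheavy if
   zeta H <= sup_Y H for every admissible H (sup in the extended reals,
   so sup over the empty set is -oo). *)
Definition superheavy (R : realType) (M : topologicalType)
  (Smooth : set (M -> R)) (zeta : (M -> R) -> R) (Y : set M) : Prop :=
  forall H : M -> R, Smooth H ->
    ((zeta H)%:E <= ereal_sup [set (H x)%:E | x in Y])%E.

(* Main.v *)
Require Import Defs.
From HB Require Import structures.
From mathcomp Require Import all_boot all_order all_algebra.
From mathcomp Require Import all_classical all_reals all_analysis.
Import numFieldTopology.Exports numFieldNormedType.Exports.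
Local Open Scope classical_set_scope.
Local Open Scope ring_scope.
Import Order.TTheory GRing.Theory Num.Theory.

Theorem lemma4p10 (R : realType) (M : topologicalType)
  (Smooth : set (M -> R)) (zeta : (M -> R) -> R) (X : set M) :
  compact [set: M] ->
  (forall H, Smooth H -> continuous H) ->
  closed X ->
  (forall U : set M, open U -> X `<=` U ->
     superheavy Smooth zeta (closure U)) ->
  superheavy Smooth zeta X.
Proof.
move=> _ Hc cX hU H sH.
have ub : forall x, X x -> ((H x)%:E <= ereal_sup [set (H x)%:E | x in X])%E.
  by move=> x Xx; apply: ereal_sup_ubound; exists x.
case Es: (ereal_sup [set (H x)%:E | x in X]) => [r| |]; last first.
- have X0 : X `<=` set0.
    by move=> x Xx; have := ub x Xx; rewrite Es leeNy_eq.
  have := hU set0 open0 X0 H sH.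
  by rewrite closure0 image_set0 ereal_sup0.
- exact: leey.
rewrite lee_fin; apply/ler_addgt0Pr => e e0.
pose U := H @^-1` [set y | y < r + e].
have oU : open U by apply: open_comp => // x _; exact: Hc.
have XU : X `<=` U.
  move=> x Xx; have := ub x Xx; rewrite Es lee_fin => hx.
  by rewrite /U /=; apply: (le_lt_trans hx); rewrite ltrDl.
have := hU U oU XU H sH.
move=> h; rewrite -lee_fin; apply: (le_trans h).
apply: ge_ereal_sup => _ [x Ux <-]; rewrite lee_fin.
have cl : closed (H @^-1` [set y | y <= r + e]).
  apply: preimage_closed; last exact: closed_le.
  by move=> y _; exact: Hc.
have sub : closure U `<=` H @^-1` [set y | y <= r + e].
  have sUP : U `<=` H @^-1` [set y | y <= r + e].
    by move=> y; rewrite /U /=; exact: ltW.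
  have := closureS sUP; by move/closure_id: cl => <-.
exact: sub.
Qed.
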